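(* If $F:\mathbb{R}\to\mathbb{R}$ is a Darboux function which is continuous at only countably many points, then there is a non-constant continuous function $f:\mathbb{R}\to\mathbb{R}$ such that $F+f$ is Darboux.
   Context: A function $F:\mathbb{R}\to\mathbb{R}$ is Darboux if the image under $F$ of every interval is an interval. *)

(* Defs.v *)
From Stdlib Require Import Reals.
Open Scope R_scope.

Definition is_interval (S : R -> Prop) : Prop :=
  forall a b c, S a -> S b -> a <= c <= b -> S c.

Definition image (F : R -> R) (S : R -> Prop) : R -> Prop :=
  fun y => exists x, S x /\ y = F x.

Definition Darboux (F : R -> R) : Prop :=
  forall I : R -> Prop, is_interval I -> is_interval (image F I).

Definition countable_set (S : R -> Prop) : Prop :=
  exists g : R -> nat, forall x y, S x -> S y -> g x = g y -> x = y.

(* Main.v *)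
Require Import Defs.
From Stdlib Require Import Reals Lra Lia ZArith Classical ClassicalEpsilon Cantor.
Open Scope R_scope.

Definition IVT (G : R -> R) := forall a b, a <= b -> forall w,
  (G a <= w <= G b \/ G b <= w <= G a) -> exists z, a <= z <= b /\ G z = w.

Lemma Darboux_IVT F : Darboux F -> IVT F.
Proof.
  intros HD a b Hab w Hw.
  assert (HI : is_interval (fun x => a <= x <= b)) by (intros x y z Hx Hy Hz; lra).
  pose proof (HD _ HI) as Him.
  assert (Ha : image F (fun x => a <= x <= b) (F a)) by (exists a; split; [lra|reflexivity]).
  assert (Hb : image F (fun x => a <= x <= b) (F b)) by (exists b; split; [lra|reflexivity]).
  destruct Hw as [Hw|Hw].
  - destruct (Him _ _ _ Ha Hb Hw) as [z [Hz Hz']]. exists z; split; auto.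
  - destruct (Him _ _ _ Hb Ha Hw) as [z [Hz Hz']]. exists z; split; auto.
Qed.

Lemma IVT_Darboux G : IVT G -> Darboux G.
Proof.
  intros HG I HI y1 y2 y [x1 [Hx1 E1]] [x2 [Hx2 E2]] Hy. subst y1 y2.
  destruct (Rle_dec x1 x2) as [H|H].
  - destruct (HG x1 x2 H y (or_introl Hy)) as [z [Hz Hz']].
    exists z; split; [apply (HI x1 x2); auto | auto].
  - destruct (HG x2 x1 ltac:(lra) y (or_intror Hy)) as [z [Hz Hz']].
    exists z; split; [apply (HI x2 x1); auto | auto].
Qed.

Lemma IVT_between F : IVT F -> forall x y w, (F x <= w <= F y \/ F y <= w <= F x) ->
  exists c, Rmin x y <= c <= Rmax x y /\ F c = w.
Proof.
  intros HF x y w Hw.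
  destruct (Rle_dec x y) as [H|H].
  - destruct (HF x y H w Hw) as [c [Hc Hc']]. exists c; split; auto.
    rewrite Rmin_left, Rmax_right; auto.
  - destruct (HF y x ltac:(lra) w ltac:(tauto)) as [c [Hc Hc']]. exists c; split; auto.
    rewrite Rmin_right, Rmax_left; lra.
Qed.

Lemma cluster F : IVT F -> forall x y e, x <> y -> 0 < e ->
  exists t, Rmin x y < t < Rmax x y /\ Rabs (F t - F x) < e.
Proof.
  intros HF x y e Hxy He.
  set (m := (x + y) / 2).
  assert (Hm : Rmin x y < m < Rmax x y).
  { unfold m, Rmin, Rmax; destruct Rle_dec; lra. }
  destruct (Rlt_dec (Rabs (F m - F x)) e) as [H|H].
  - exists m; split; auto.
  - apply Rnot_lt_le in H.
    assert (Hc : exists c, Rmin x m <= c <= Rmax x m /\ F c <> F x /\ Rabs (F c - F x) < e).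
    { destruct (Rle_dec (F x + e) (F m)) as [H1|H1].
      - destruct (IVT_between F HF x m (F x + e/2) ltac:(left; lra)) as [c [Hc Hc']].
        exists c; split; auto. rewrite Hc'. split; [lra|]. rewrite Rabs_right; lra.
      - assert (F m <= F x - e) by (unfold Rabs in H; destruct Rcase_abs; lra).
        destruct (IVT_between F HF x m (F x - e/2) ltac:(right; lra)) as [c [Hc Hc']].
        exists c; split; auto. rewrite Hc'. split; [lra|]. rewrite Rabs_left; lra. }
    destruct Hc as [c [Hc [Hc1 Hc2]]].
    assert (c <> x) by (intro; subst; lra).
    exists c; split; auto.
    revert Hc Hm H0. unfold Rmin, Rmax; repeat destruct Rle_dec; intros; lra.
Qed.

Lemma cont_crit F x : (forall e, 0 < e -> exists d, 0 < d /\ forall y, Rabs (y - x) < d -> Rabs (F y - F x) < e) -> continuity_pt F x.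
Proof.
  intros H e He. destruct (H e He) as [d [Hd Hy]]. exists d; split; auto.
  intros y [_ Hy']. apply Hy. exact Hy'.
Qed.

Lemma discont_sign F x : ~ continuity_pt F x ->
  exists e, 0 < e /\ ((forall d, 0 < d -> exists y, Rabs (y - x) < d /\ F x + e <= F y) \/
                      (forall d, 0 < d -> exists y, Rabs (y - x) < d /\ F y <= F x - e)).
Proof.
  intro Hn.
  assert (H : exists e, 0 < e /\ forall d, 0 < d -> exists y, Rabs (y - x) < d /\ e <= Rabs (F y - F x)).
  { apply NNPP; intro H1; apply Hn; apply cont_crit; intros e He.
    apply NNPP; intro H2; apply H1; exists e; split; auto; intros d Hd.
    apply NNPP; intro H3; apply H2; exists d; split; auto; intros y Hy.
    apply Rnot_le_lt; intro H4; apply H3; exists y; auto. }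
  destruct H as [e [He H]]. exists e; split; auto.
  destruct (classic (forall d, 0 < d -> exists y, Rabs (y - x) < d /\ F x + e <= F y)) as [H1|H1]; [left; auto| right].
  apply not_all_ex_not in H1. destruct H1 as [d1 H1].
  apply imply_to_and in H1. destruct H1 as [Hd1 H1].
  intros d Hd. destruct (H (Rmin d d1) ltac:(apply Rmin_pos; auto)) as [y [Hy1 Hy2]].
  exists y. split. { eapply Rlt_le_trans; [exact Hy1| apply Rmin_l]. }
  assert (F y < F x + e). { apply Rnot_le_lt. intro. apply H1. exists y. split; auto. eapply Rlt_le_trans; [exact Hy1| apply Rmin_r]. }
  unfold Rabs in Hy2; destruct Rcase_abs; lra.
Qed.
Definition cell (n : nat) : R * R :=
  let '(k, pq) := Cantor.of_nat n in
  let '(p, q) := Cantor.of_nat pq in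
  ((INR p - INR q) / (INR k + 1), (INR p - INR q + 1) / (INR k + 1)).

Lemma cell_lt n : fst (cell n) < snd (cell n).
Proof.
  unfold cell. destruct (Cantor.of_nat n) as [k pq]. destruct (Cantor.of_nat pq) as [p q].
  simpl. unfold Rdiv. apply Rmult_lt_compat_r; [apply Rinv_0_lt_compat; pose proof (pos_INR k); lra | lra].
Qed.

Lemma cell_spec y e : 0 < e -> exists n, fst (cell n) <= y <= snd (cell n) /\ snd (cell n) - fst (cell n) < e.
Proof.
  intros He.
  destruct (archimed (/ e)) as [H1 _].
  set (k := Z.to_nat (up (/ e))).
  assert (Hk : / e < INR k + 1).
  { unfold k. rewrite INR_IZR_INZ. destruct (ZArith_dec.Z_le_gt_dec 0 (up (/ e))) as [Hz|Hz].
    - rewrite Z2Nat.id by lia. lra.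
    - assert (IZR (up (/ e)) <= 0) by (apply IZR_le; lia).
      pose proof (Rinv_0_lt_compat e He). lra. }
  assert (Hk0 : 0 < INR k + 1) by (pose proof (pos_INR k); lra).
  set (r := y * (INR k + 1)).
  destruct (archimed r) as [A1 A2].
  set (N := (up r - 1)%Z).
  set (p := Z.to_nat N). set (q := Z.to_nat (- N)).
  assert (HN : INR p - INR q = IZR N).
  { rewrite !INR_IZR_INZ, <- minus_IZR. f_equal. unfold p, q. lia. }
  assert (HN' : IZR N = IZR (up r) - 1) by (unfold N; rewrite minus_IZR; reflexivity).
  exists (Cantor.to_nat (k, Cantor.to_nat (p, q))).
  unfold cell. rewrite !Cantor.cancel_of_to. simpl. rewrite HN.
  assert (E1 : IZR N / (INR k + 1) <= y).
  { apply (Rmult_le_reg_r (INR k + 1)); auto. unfold Rdiv. rewrite Rmult_assoc, Rinv_l by lra.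
    unfold r in *. lra. }
  assert (E2 : y <= (IZR N + 1) / (INR k + 1)).
  { apply (Rmult_le_reg_r (INR k + 1)); auto. unfold Rdiv. rewrite Rmult_assoc, Rinv_l by lra.
    unfold r in *. lra. }
  split; [lra|].
  replace ((IZR N + 1) / (INR k + 1) - IZR N / (INR k + 1)) with (/ (INR k + 1)) by (field; lra).
  apply (Rmult_lt_reg_r e); auto.
  apply (Rmult_lt_reg_l (INR k + 1)); auto.
  replace ((INR k + 1) * (/ (INR k + 1) * e)) with e by (field; lra).
  replace ((INR k + 1) * (e * e)) with (e * ((INR k + 1) * e)) by ring.
  apply (Rmult_lt_reg_l (/ e)). apply Rinv_0_lt_compat; auto.
  replace (/ e * e) with 1 by (field; lra).
  replace (/ e * (e * ((INR k + 1) * e))) with ((INR k + 1) * e) by (field; lra).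
  apply (Rmult_lt_reg_r (/ e)). apply Rinv_0_lt_compat; auto.
  replace ((INR k + 1) * e * / e) with (INR k + 1) by (field; lra). lra.
Qed.

Lemma cell_inside lo hi y : lo < y < hi -> exists n, lo < fst (cell n) /\ fst (cell n) <= y <= snd (cell n) /\ snd (cell n) < hi.
Proof.
  intros H. destruct (cell_spec y (Rmin (y - lo) (hi - y)) ltac:(apply Rmin_pos; lra)) as [n [H1 H2]].
  exists n. pose proof (Rmin_l (y - lo) (hi - y)). pose proof (Rmin_r (y - lo) (hi - y)). lra.
Qed.

Definition good (F : R -> R) a b l1 l2 := forall l, l1 <= l <= l2 -> exists z, a < z < b /\ F z = l.
Definition PL (F : R -> R) l1 l2 x := forall a b, a < x < b -> good F a b l1 l2.

Lemma discont_PL F : IVT F -> forall x, ~ continuity_pt F x ->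
  exists n, PL F (fst (cell n)) (snd (cell n)) x.
Proof.
  intros HF x Hx. destruct (discont_sign F x Hx) as [e [He [H|H]]].
  - destruct (cell_inside (F x) (F x + e) (F x + e/2) ltac:(lra)) as [n [H1 [H2 H3]]].
    exists n. intros a b Hab l Hl.
    destruct (H (Rmin (x - a) (b - x)) ltac:(apply Rmin_pos; lra)) as [y [Hy1 Hy2]].
    pose proof (Rmin_l (x - a) (b - x)). pose proof (Rmin_r (x - a) (b - x)).
    assert (a < y < b) by (unfold Rabs in Hy1; destruct Rcase_abs; lra).
    destruct (IVT_between F HF x y l ltac:(left; lra)) as [c [Hc Hc']].
    exists c; split; auto. revert Hc. unfold Rmin, Rmax; destruct Rle_dec; intros; lra.
  - destruct (cell_inside (F x - e) (F x) (F x - e/2) ltac:(lra)) as [n [H1 [H2 H3]]].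
    exists n. intros a b Hab l Hl.
    destruct (H (Rmin (x - a) (b - x)) ltac:(apply Rmin_pos; lra)) as [y [Hy1 Hy2]].
    pose proof (Rmin_l (x - a) (b - x)). pose proof (Rmin_r (x - a) (b - x)).
    assert (a < y < b) by (unfold Rabs in Hy1; destruct Rcase_abs; lra).
    destruct (IVT_between F HF x y l ltac:(right; lra)) as [c [Hc Hc']].
    exists c; split; auto. revert Hc. unfold Rmin, Rmax; destruct Rle_dec; intros; lra.
Qed.

Lemma core F : IVT F -> countable_set (fun x => continuity_pt F x) ->
  exists u v l1 l2, u < v /\ l1 < l2 /\
    forall a b, u <= a -> a < b -> b <= v -> good F a b l1 l2.
Proof.
  intros HF [g Hg]. apply NNPP; intro H.
  assert (H' : forall u v l1 l2, u < v -> l1 < l2 -> exists a b, u <= a /\ a < b /\ b <= v /\ ~ good F a b l1 l2).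
  { intros u v l1 l2 Huv Hl. apply NNPP; intro H1; apply H. exists u, v, l1, l2.
    split; auto; split; auto. intros a b Ha Hab Hb. apply NNPP; intro H2; apply H1.
    exists a, b; auto. }
  assert (step : forall n (p : R * R), exists q : R * R, fst p < snd p ->
     fst p < fst q /\ fst q < snd q /\ snd q < snd p /\
     (forall x, fst q <= x <= snd q -> ~ PL F (fst (cell n)) (snd (cell n)) x) /\
     (forall c, continuity_pt F c -> g c = n -> ~ (fst q <= c <= snd q))).
  { intros n [u v]. simpl.
    destruct (Rlt_dec u v) as [Huv|Huv]; [| exists (0,0); intro; lra].
    destruct (H' u v _ _ Huv (cell_lt n)) as [a [b [Ha [Hab [Hb Hng]]]]].
    set (h := (b - a) / 5).
    assert (Hh : 0 < h) by (unfold h; lra).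
    assert (HP : forall x, a < x < b -> ~ PL F (fst (cell n)) (snd (cell n)) x).
    { intros x Hx HPL. apply Hng. apply HPL. auto. }
    destruct (classic (exists c, continuity_pt F c /\ g c = n /\ a + h <= c <= a + 2 * h)) as [[c [Hc1 [Hc2 Hc3]]]|Hnc].
    - exists (a + 3 * h, a + 4 * h). intros _. simpl. split; [lra|]. split; [lra|]. split; [unfold h in *; lra|].
      split.
      + intros x Hx. apply HP. unfold h in *; lra.
      + intros c' Hc'1 Hc'2. assert (c' = c) by (apply Hg; auto; congruence). subst. lra.
    - exists (a + h, a + 2 * h). intros _. simpl. split; [lra|]. split; [lra|]. split; [unfold h in *; lra|].
      split.
      + intros x Hx. apply HP. unfold h in *; lra.
      + intros c' Hc'1 Hc'2 Hc'3. apply Hnc. exists c'; auto. }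
  set (nx := fun n p => proj1_sig (constructive_indefinite_description _ (step n p))).
  assert (Hnx : forall n p, fst p < snd p -> _) by (intros n p; exact (proj2_sig (constructive_indefinite_description _ (step n p)))).
  set (I := nat_rect (fun _ => (R * R)%type) (0, 1) (fun k p => nx k p)).
  assert (HI : forall n, fst (I n) < snd (I n)).
  { induction n; [simpl; lra|]. change (I (S n)) with (nx n (I n)).
    destruct (Hnx n (I n) IHn) as [A [B _]]. exact B. }
  assert (HIs : forall n, fst (I n) < fst (I (S n)) /\ snd (I (S n)) < snd (I n)).
  { intro n. change (I (S n)) with (nx n (I n)).
    destruct (Hnx n (I n) (HI n)) as [A [B [C _]]]. auto. }
  assert (Hfst : forall n m, (n <= m)%nat -> fst (I n) <= fst (I m)).
  { intros n m Hnm. induction Hnm; [lra|]. pose proof (HIs m). lra. }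
  assert (Hsnd : forall n m, (n <= m)%nat -> snd (I m) <= snd (I n)).
  { intros n m Hnm. induction Hnm; [lra|]. pose proof (HIs m). lra. }
  assert (Hfs : forall n m, fst (I n) <= snd (I m)).
  { intros n m. pose proof (Hfst n (Nat.max n m) (Nat.le_max_l _ _)).
    pose proof (Hsnd m (Nat.max n m) (Nat.le_max_r _ _)). pose proof (HI (Nat.max n m)). lra. }
  set (E := fun y => exists n, y = fst (I n)).
  assert (Eb : bound E) by (exists (snd (I O)); intros y [n ->]; apply Hfs).
  assert (Ee : exists y, E y) by (exists (fst (I O)); exists 0%nat; reflexivity).
  destruct (completeness E Eb Ee) as [z [Hz1 Hz2]].
  assert (Hz : forall n, fst (I n) <= z <= snd (I n)).
  { intro n. split; [apply Hz1; exists n; reflexivity|]. apply Hz2. intros y [k ->]. apply Hfs. }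
  assert (Hz' : forall n, fst (nx n (I n)) <= z <= snd (nx n (I n))) by (intro n; exact (Hz (S n))).
  destruct (classic (continuity_pt F z)) as [Hc|Hc].
  - destruct (Hnx (g z) (I (g z)) (HI _)) as [_ [_ [_ [_ Hav]]]].
    apply (Hav z Hc eq_refl). apply Hz'.
  - destruct (discont_PL F HF z Hc) as [n Hn].
    destruct (Hnx n (I n) (HI _)) as [_ [_ [_ [Hav _]]]].
    apply (Hav z (Hz' n)). exact Hn.
Qed.
Definition clamp (a b x : R) : R :=
  if Rle_dec x a then a else if Rle_dec b x then b else x.

Lemma clamp_range a b x : a <= b -> a <= clamp a b x <= b.
Proof. intros; unfold clamp; repeat destruct Rle_dec; lra. Qed.
Lemma clamp_mono a b x y : a <= b -> x <= y -> clamp a b x <= clamp a b y.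
Proof. intros; unfold clamp; repeat destruct Rle_dec; lra. Qed.
Lemma clamp_lip a b x y : a <= b -> x <= y -> clamp a b y - clamp a b x <= y - x.
Proof. intros; unfold clamp; repeat destruct Rle_dec; lra. Qed.
Lemma clamp_cases a b x y : a <= b -> x <= y ->
  clamp a b x = clamp a b y \/ (x <= clamp a b x /\ clamp a b y <= y).
Proof. intros; unfold clamp; repeat destruct Rle_dec; try (left; lra); right; lra. Qed.
Lemma clamp_id a b x : a <= x <= b -> clamp a b x = x.
Proof. intros; unfold clamp; repeat destruct Rle_dec; lra. Qed.
Lemma clamp_le a b x : a < x -> clamp a b x <= x.
Proof. intros; unfold clamp; repeat destruct Rle_dec; lra. Qed.
Lemma clamp_left a b x : x <= a -> clamp a b x = a.
Proof. intros; unfold clamp; repeat destruct Rle_dec; lra. Qed.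

Definition rr (d : R) (n : nat) : R := d / 2 ^ (S (S (S n))).

Fixpoint phi (p0 d : R) (s : nat -> R) (N : nat) (x : R) : R :=
  match N with
  | O => clamp p0 (p0 + d) x - p0
  | S N => phi p0 d s N x - (phi p0 d s N (clamp (s N - rr d N) (s N + rr d N) x) - phi p0 d s N (s N - rr d N))
  end.

Section PhiProps.
Lemma rr_pos d n : 0 < d -> 0 < rr d n.
Proof. intros; unfold rr; apply Rdiv_lt_0_compat; auto; apply pow_lt; lra. Qed.

Lemma phi_step p0 d s N : 0 < d -> (forall x y, x <= y -> phi p0 d s N x <= phi p0 d s N y) ->
  forall x y, x <= y -> 0 <= phi p0 d s (S N) y - phi p0 d s (S N) x <= phi p0 d s N y - phi p0 d s N x.
Proof.
  intros Hd Hm x y Hxy. simpl.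
  pose proof (rr_pos d N Hd).
  set (a := s N - rr d N). set (b := s N + rr d N).
  assert (Hab : a <= b) by (unfold a, b; lra).
  pose proof (clamp_mono a b x y Hab Hxy).
  pose proof (Hm _ _ (clamp_mono a b x y Hab Hxy)).
  destruct (clamp_cases a b x y Hab Hxy) as [E|[E1 E2]].
  - rewrite E. pose proof (Hm _ _ Hxy). lra.
  - pose proof (Hm _ _ E1). pose proof (Hm _ _ E2). lra.
Qed.

Lemma phi_mono p0 d s N : 0 < d -> forall x y, x <= y -> phi p0 d s N x <= phi p0 d s N y.
Proof.
  intros Hd. induction N; intros x y Hxy.
  - simpl. pose proof (clamp_mono p0 (p0 + d) x y ltac:(lra) Hxy). lra.
  - pose proof (phi_step p0 d s N Hd IHN x y Hxy). lra.
Qed.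

Lemma phi_incr_le p0 d s N M : 0 < d -> (N <= M)%nat -> forall x y, x <= y ->
  phi p0 d s M y - phi p0 d s M x <= phi p0 d s N y - phi p0 d s N x.
Proof.
  intros Hd H. induction H; intros x y Hxy; [lra|].
  pose proof (phi_step p0 d s m Hd (phi_mono p0 d s m Hd) x y Hxy). specialize (IHle x y Hxy). lra.
Qed.

Lemma phi_lip p0 d s N x y : 0 < d -> x <= y -> phi p0 d s N y - phi p0 d s N x <= y - x.
Proof.
  intros Hd Hxy. pose proof (phi_incr_le p0 d s 0 N Hd (Nat.le_0_l N) x y Hxy).
  simpl in H. pose proof (clamp_lip p0 (p0 + d) x y ltac:(lra) Hxy). lra.
Qed.

Lemma phi_dec1 p0 d s N x : 0 < d -> phi p0 d s (S N) x <= phi p0 d s N x.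
Proof.
  intros Hd. simpl. pose proof (rr_pos d N Hd).
  pose proof (clamp_range (s N - rr d N) (s N + rr d N) x ltac:(lra)).
  pose proof (phi_mono p0 d s N Hd (s N - rr d N) (clamp (s N - rr d N) (s N + rr d N) x) ltac:(lra)). lra.
Qed.

Lemma phi_dec p0 d s N M x : 0 < d -> (N <= M)%nat -> phi p0 d s M x <= phi p0 d s N x.
Proof.
  intros Hd H. induction H; [lra|]. pose proof (phi_dec1 p0 d s m x Hd). lra.
Qed.

Lemma phi_flat p0 d s N x : 0 < d -> s N - rr d N <= x <= s N + rr d N ->
  phi p0 d s (S N) x = phi p0 d s N (s N - rr d N).
Proof. intros Hd Hx. simpl. rewrite clamp_id by lra. ring. Qed.

Lemma phi_const p0 d s N M x y : 0 < d -> (S N <= M)%nat ->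
  s N - rr d N <= x <= s N + rr d N -> s N - rr d N <= y <= s N + rr d N ->
  phi p0 d s M x = phi p0 d s M y.
Proof.
  intros Hd HM Hx Hy.
  assert (forall x y, s N - rr d N <= x <= s N + rr d N -> s N - rr d N <= y <= s N + rr d N -> x <= y ->
     phi p0 d s M x = phi p0 d s M y).
  { clear x y Hx Hy. intros x y Hx Hy Hxy.
    pose proof (phi_incr_le p0 d s (S N) M Hd HM x y Hxy).
    rewrite (phi_flat p0 d s N x Hd Hx), (phi_flat p0 d s N y Hd Hy) in H.
    pose proof (phi_mono p0 d s M Hd x y Hxy). lra. }
  destruct (Rle_dec x y); [apply H; auto|symmetry; apply H; auto; lra].
Qed.

Lemma phi_left p0 d s N x : 0 < d -> x <= p0 -> phi p0 d s N x = 0.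
Proof.
  intros Hd. revert x. induction N; intros x Hx.
  - simpl. rewrite clamp_left by lra. ring.
  - simpl. set (a := s N - rr d N). set (b := s N + rr d N).
    destruct (Rle_dec x a) as [H|H].
    + rewrite (clamp_left a b x H). rewrite IHN by lra. ring.
    + pose proof (clamp_le a b x ltac:(lra)).
      rewrite !IHN by lra. ring.
Qed.

Lemma phi_nonneg p0 d s N x : 0 < d -> 0 <= phi p0 d s N x.
Proof.
  intros Hd. destruct (Rle_dec x p0).
  - rewrite phi_left; auto; lra.
  - rewrite <- (phi_left p0 d s N p0 Hd (Rle_refl _)). apply phi_mono; auto; lra.
Qed.

Lemma phi_right p0 d s N x : 0 < d -> p0 + d <= x -> phi p0 d s N x = phi p0 d s N (p0 + d).
Proof.
  intros Hd Hx. pose proof (phi_incr_le p0 d s 0 N Hd (Nat.le_0_l N) _ _ Hx). simpl in H.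
  rewrite (clamp_id p0 (p0 + d) (p0 + d)) in H by lra.
  unfold clamp at 1 in H. repeat destruct Rle_dec in H; try lra.
  pose proof (phi_mono p0 d s N Hd _ _ Hx). lra.
Qed.

Lemma phi_le_d p0 d s N x : 0 < d -> phi p0 d s N x <= d.
Proof.
  intros Hd. pose proof (phi_dec p0 d s 0 N x Hd (Nat.le_0_l N)). simpl in H.
  pose proof (clamp_range p0 (p0 + d) x ltac:(lra)). lra.
Qed.

Lemma phi_v p0 d s N : 0 < d -> d / 2 + d / 2 ^ (S N) <= phi p0 d s N (p0 + d).
Proof.
  intros Hd. induction N.
  - simpl. rewrite clamp_id by lra. lra.
  - simpl phi. set (a := s N - rr d N). set (b := s N + rr d N).
    pose proof (rr_pos d N Hd).
    assert (Hab : a <= b) by (unfold a, b; lra).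
    pose proof (clamp_range a b (p0 + d) Hab).
    pose proof (phi_lip p0 d s N a (clamp a b (p0 + d)) Hd ltac:(lra)).
    assert (E : b - a = d / 2 ^ (S (S N))).
    { unfold a, b, rr. simpl. field. pose proof (pow_lt 2 N ltac:(lra)). lra. }
    assert (E2 : d / 2 ^ S N - d / 2 ^ S (S N) = d / 2 ^ S (S N)).
    { simpl. field. pose proof (pow_lt 2 N ltac:(lra)). lra. }
    lra.
Qed.
End PhiProps.

Definition lub (E : R -> Prop) : R :=
  match excluded_middle_informative (bound E /\ exists x, E x) with
  | left H => proj1_sig (completeness E (proj1 H) (proj2 H))
  | right _ => 0
  end.

Lemma lub_spec E : bound E -> (exists x, E x) -> is_lub E (lub E).
Proof.
  intros Hb He. unfold lub. destruct excluded_middle_informative as [H|H].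
  - exact (proj2_sig (completeness E (proj1 H) (proj2 H))).
  - exfalso; auto.
Qed.

Definition ff (p0 d : R) (s : nat -> R) (x : R) : R :=
  - lub (fun y => exists N, y = - phi p0 d s N x).

Lemma ff_le p0 d s N x : 0 < d -> ff p0 d s x <= phi p0 d s N x.
Proof.
  intros Hd. unfold ff.
  destruct (lub_spec (fun y => exists N, y = - phi p0 d s N x)) as [H1 H2].
  - exists 0. intros y [M ->]. pose proof (phi_nonneg p0 d s M x Hd). lra.
  - exists (- phi p0 d s 0 x). exists 0%nat. reflexivity.
  - assert (- phi p0 d s N x <= lub (fun y => exists N, y = - phi p0 d s N x)) by (apply H1; exists N; auto). lra.
Qed.

Lemma ff_ge p0 d s x m : 0 < d -> (forall N, m <= phi p0 d s N x) -> m <= ff p0 d s x.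
Proof.
  intros Hd Hm. unfold ff.
  destruct (lub_spec (fun y => exists N, y = - phi p0 d s N x)) as [H1 H2].
  - exists 0. intros y [M ->]. pose proof (phi_nonneg p0 d s M x Hd). lra.
  - exists (- phi p0 d s 0 x). exists 0%nat. reflexivity.
  - assert (lub (fun y => exists N, y = - phi p0 d s N x) <= - m).
    { apply H2. intros y [M ->]. specialize (Hm M). lra. }
    lra.
Qed.

Lemma ff_lip p0 d s x y : 0 < d -> x <= y -> 0 <= ff p0 d s y - ff p0 d s x <= y - x.
Proof.
  intros Hd Hxy. split.
  - assert (ff p0 d s x <= ff p0 d s y).
    { apply ff_ge; auto. intros N. pose proof (ff_le p0 d s N x Hd).
      pose proof (phi_mono p0 d s N Hd x y Hxy). lra. }
    lra.
  - assert (ff p0 d s y - (y - x) <= ff p0 d s x).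
    { apply ff_ge; auto. intros N. pose proof (ff_le p0 d s N y Hd).
      pose proof (phi_lip p0 d s N x y Hd Hxy). lra. }
    lra.
Qed.

Lemma ff_abs p0 d s x y : 0 < d -> Rabs (ff p0 d s y - ff p0 d s x) <= Rabs (y - x).
Proof.
  intros Hd. destruct (Rle_dec x y) as [H|H].
  - pose proof (ff_lip p0 d s x y Hd H). rewrite !Rabs_right; lra.
  - pose proof (ff_lip p0 d s y x Hd ltac:(lra)). rewrite !Rabs_left1; lra.
Qed.

Lemma ff_flat p0 d s n x y : 0 < d -> s n - rr d n <= x <= s n + rr d n ->
  s n - rr d n <= y <= s n + rr d n -> ff p0 d s x = ff p0 d s y.
Proof.
  intros Hd Hx Hy.
  assert (forall x y, s n - rr d n <= x <= s n + rr d n -> s n - rr d n <= y <= s n + rr d n ->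
     ff p0 d s y <= ff p0 d s x).
  { clear x y Hx Hy. intros x y Hx Hy. apply ff_ge; auto. intros M.
    pose proof (ff_le p0 d s (Nat.max M (S n)) y Hd).
    rewrite (phi_const p0 d s n (Nat.max M (S n)) y x Hd (Nat.le_max_r _ _) Hy Hx) in H.
    pose proof (phi_dec p0 d s M (Nat.max M (S n)) x Hd (Nat.le_max_l _ _)). lra. }
  pose proof (H x y Hx Hy). pose proof (H y x Hy Hx). lra.
Qed.

Lemma ff_range p0 d s x : 0 < d -> 0 <= ff p0 d s x <= d.
Proof.
  intros Hd. split.
  - apply ff_ge; auto. intros; apply phi_nonneg; auto.
  - pose proof (ff_le p0 d s 0 x Hd). pose proof (phi_le_d p0 d s 0 x Hd). lra.
Qed.

Lemma ff_left p0 d s x : 0 < d -> x <= p0 -> ff p0 d s x = 0.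
Proof.
  intros Hd Hx. pose proof (ff_range p0 d s x Hd). pose proof (ff_le p0 d s 0 x Hd).
  rewrite phi_left in H0; auto. lra.
Qed.

Lemma ff_right p0 d s x : 0 < d -> p0 + d <= x -> ff p0 d s x = ff p0 d s (p0 + d).
Proof.
  intros Hd Hx. apply Rle_antisym; apply ff_ge; auto; intros N.
  - rewrite <- (phi_right p0 d s N x Hd Hx). apply ff_le; auto.
  - rewrite (phi_right p0 d s N x Hd Hx). apply ff_le; auto.
Qed.

Lemma ff_v p0 d s : 0 < d -> d / 2 <= ff p0 d s (p0 + d).
Proof.
  intros Hd. apply ff_ge; auto. intros N. pose proof (phi_v p0 d s N Hd).
  assert (0 < d / 2 ^ S N) by (apply Rdiv_lt_0_compat; auto; apply pow_lt; lra). lra.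
Qed.

Lemma exP (P : R -> Prop) : exists t, (exists t', P t') -> P t.
Proof.
  destruct (classic (exists t', P t')) as [[t Ht]|H].
  - exists t; auto.
  - exists 0; intro; contradiction.
Qed.

Definition pick (P : R -> Prop) : R := proj1_sig (constructive_indefinite_description _ (exP P)).

Lemma pick_spec P : (exists t, P t) -> P (pick P).
Proof. intro H. exact (proj2_sig (constructive_indefinite_description _ (exP P)) H). Qed.

Definition sF (F : R -> R) (n : nat) : R :=
  let '(i, j) := Cantor.of_nat n in
  pick (fun t => fst (cell i) <= t <= snd (cell i) /\ fst (cell j) <= F t <= snd (cell j)).

Lemma sF_spec F i j t : fst (cell i) <= t <= snd (cell i) -> fst (cell j) <= F t <= snd (cell j) ->
  let x := sF F (Cantor.to_nat (i, j)) in
  fst (cell i) <= x <= snd (cell i) /\ fst (cell j) <= F x <= snd (cell j).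
Proof.
  intros H1 H2. unfold sF. rewrite Cantor.cancel_of_to. apply pick_spec. exists t; auto.
Qed.

Lemma abs_lt x e : Rabs x < e <-> - e < x < e.
Proof. unfold Rabs; destruct Rcase_abs; split; intros; lra. Qed.
Lemma abs_le x e : Rabs x <= e <-> - e <= x <= e.
Proof. unfold Rabs; destruct Rcase_abs; split; intros; lra. Qed.

Theorem mainTheorem6 (F : R -> R) :
  Darboux F ->
  countable_set (fun x => continuity_pt F x) ->
  exists f : R -> R,
    continuity f /\
    (exists x y, f x <> f y) /\
    Darboux (fun x => F x + f x).
Proof.
  intros HD Hc. pose proof (Darboux_IVT F HD) as HF.
  destruct (core F HF Hc) as [u [v [l1 [l2 [Huv [Hl Hcore]]]]]].
  set (d := Rmin ((v - u) / 3) ((l2 - l1) / 2)).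
  assert (Hd : 0 < d) by (apply Rmin_pos; lra).
  assert (Hd1 : d <= (v - u) / 3) by apply Rmin_l.
  assert (Hd2 : d <= (l2 - l1) / 2) by apply Rmin_r.
  set (p0 := u + d). set (s := sF F). set (f := ff p0 d s).
  exists f. split; [|split].
  - intro x. apply cont_crit. intros e He. exists e. split; auto. intros y Hy.
    pose proof (ff_abs p0 d s x y Hd). unfold f. lra.
  - exists p0, (p0 + d). unfold f. rewrite ff_left by (auto; lra).
    pose proof (ff_v p0 d s Hd). lra.
  - apply IVT_Darboux. set (G := fun x => F x + f x).
    assert (Hfr : forall x, 0 <= f x <= d) by (intro; apply ff_range; auto).
    set (IVT_on := fun a b => forall w, (G a <= w <= G b \/ G b <= w <= G a) -> exists z, a <= z <= b /\ G z = w).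
    assert (Hshift : forall a b k, a <= b -> (forall z, a <= z <= b -> f z = k) -> IVT_on a b).
    { intros a b k Hab Hk w Hw.
      pose proof (Hk a ltac:(lra)). pose proof (Hk b ltac:(lra)).
      destruct (HF a b Hab (w - k)) as [z [Hz Hz']].
      { unfold G in Hw. lra. }
      exists z; split; auto. unfold G. rewrite (Hk z Hz). lra. }
    assert (Hsplit : forall a m b, a <= m <= b -> IVT_on a m -> IVT_on m b -> IVT_on a b).
    { intros a m b Hm H1 H2 w Hw.
      destruct (Rle_dec w (G m)).
      - destruct Hw as [Hw|Hw].
        + destruct (H1 w ltac:(lra)) as [z [Hz Hz']]. exists z; split; auto; lra.
        + destruct (H2 w ltac:(lra)) as [z [Hz Hz']]. exists z; split; auto; lra.
      - destruct Hw as [Hw|Hw].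
        + destruct (H2 w ltac:(lra)) as [z [Hz Hz']]. exists z; split; auto; lra.
        + destruct (H1 w ltac:(lra)) as [z [Hz Hz']]. exists z; split; auto; lra. }
    assert (Hmain : forall a b, u < a -> a <= b -> b < v -> IVT_on a b).
    { intros a b Hua Hab Hbv.
      assert (Happrox : forall p, a <= p <= b -> a < b -> forall eta, 0 < eta ->
                exists n, a <= s n <= b /\ Rabs (G (s n) - G p) < eta).
      { intros p Hp Hab' eta Heta.
        assert (Hlh : exists lo hi, a <= lo /\ lo < hi /\ hi <= b /\ (p = lo \/ p = hi) /\ hi - lo <= eta / 3).
        { destruct (Rlt_dec p b) as [H|H].
          - exists p, (p + Rmin (eta / 3) (b - p)).
            pose proof (Rmin_pos (eta/3) (b - p) ltac:(lra) ltac:(lra)).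
            pose proof (Rmin_l (eta/3) (b - p)). pose proof (Rmin_r (eta/3) (b - p)). lra.
          - exists (p - Rmin (eta / 3) (p - a)), p.
            pose proof (Rmin_pos (eta/3) (p - a) ltac:(lra) ltac:(lra)).
            pose proof (Rmin_l (eta/3) (p - a)). pose proof (Rmin_r (eta/3) (p - a)). lra. }
        destruct Hlh as [lo [hi [Hlo [Hlh [Hhi [Hpe Hw]]]]]].
        assert (Ht : exists t, lo < t < hi /\ Rabs (F t - F p) < eta / 3).
        { destruct Hpe as [Hpe|Hpe].
          - destruct (cluster F HF p hi (eta / 3) ltac:(lra) ltac:(lra)) as [t [Ht1 Ht2]].
            rewrite Rmin_left, Rmax_right in Ht1 by lra. exists t; split; auto; lra.
          - destruct (cluster F HF p lo (eta / 3) ltac:(lra) ltac:(lra)) as [t [Ht1 Ht2]].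
            rewrite Rmin_right, Rmax_left in Ht1 by lra. exists t; split; auto; lra. }
        destruct Ht as [t [Ht1 Ht2]].
        destruct (cell_inside lo hi t Ht1) as [i [Hi1 [Hi2 Hi3]]].
        set (m := eta / 3 - Rabs (F t - F p)).
        assert (Hm : 0 < m) by (unfold m; lra).
        destruct (cell_inside (F t - m) (F t + m) (F t) ltac:(lra)) as [j [Hj1 [Hj2 Hj3]]].
        destruct (sF_spec F i j t ltac:(lra) ltac:(lra)) as [Hs1 Hs2].
        exists (Cantor.to_nat (i, j)). fold s in Hs1, Hs2.
        set (x := s (Cantor.to_nat (i, j))) in *.
        split; [lra|].
        pose proof (ff_abs p0 d s p x Hd). fold f in H.
        assert (HA : -(Rabs (F t - F p)) <= F t - F p <= Rabs (F t - F p)) by (unfold Rabs; destruct Rcase_abs; lra).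
        assert (Hxp : Rabs (x - p) <= eta / 3) by (apply abs_le; destruct Hpe; subst p; lra).
        apply abs_le in H. apply abs_lt. unfold m in *. unfold G.
        lra. }
      assert (Hnear : a < b -> forall n, a <= s n <= b -> forall w, (G (s n) <= w <= l2 \/ l2 <= w <= G (s n)) ->
                exists c, a <= c <= b /\ G c = w).
      { intros Hab0 n Hn w Hw.
        pose proof (rr_pos d n Hd) as Hr.
        set (al := Rmax a (s n - rr d n)). set (be := Rmin b (s n + rr d n)).
        assert (Hal : a <= al /\ s n - rr d n <= al) by (split; [apply Rmax_l|apply Rmax_r]).
        assert (Hbe : be <= b /\ be <= s n + rr d n) by (split; [apply Rmin_l|apply Rmin_r]).
        assert (Hsal : al <= s n) by (unfold al; apply Rmax_lub; lra).
        assert (Hsbe : s n <= be) by (unfold be; apply Rmin_glb; lra).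
        assert (Hab2 : al < be).
        { unfold al, be. unfold Rmax, Rmin. repeat destruct Rle_dec; lra. }
        set (ph := f (s n)).
        assert (Hflat : forall z, al <= z <= be -> f z = ph).
        { intros z Hz. unfold f, ph. apply ff_flat with (n := n); auto; lra. }
        pose proof (Hfr (s n)) as Hph. fold ph in Hph.
        destruct (Hcore al be ltac:(lra) Hab2 ltac:(lra) (l2 - ph) ltac:(lra)) as [z [Hz Hz']].
        destruct (IVT_between F HF (s n) z (w - ph)) as [c [Hcc Hcc']].
        { unfold G in Hw. fold ph in Hw. lra. }
        assert (al <= c <= be).
        { revert Hcc. unfold Rmin, Rmax. destruct Rle_dec; intros; lra. }
        exists c. split; [lra|]. unfold G. rewrite Hflat by auto. lra. }
      intros w Hw.
      destruct (Req_dec w (G a)) as [E|E]; [exists a; split; [lra|auto]|].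
      destruct (Req_dec w (G b)) as [E'|E']; [exists b; split; [lra|auto]|].
      assert (Hab' : a < b).
      { destruct (Req_dec a b) as [Ea|Ea]; [|lra]. subst b. lra. }
      assert (Hpq : exists p q, a <= p <= b /\ a <= q <= b /\ G p < w < G q).
      { destruct Hw as [Hw|Hw].
        - exists a, b. lra.
        - exists b, a. lra. }
      destruct Hpq as [p [q [Hp [Hq Hpq]]]].
      destruct (Happrox p Hp Hab' (w - G p) ltac:(lra)) as [n1 [Hn1 Hn1']].
      destruct (Happrox q Hq Hab' (G q - w) ltac:(lra)) as [n2 [Hn2 Hn2']].
      apply abs_lt in Hn1'. apply abs_lt in Hn2'.
      destruct (Rle_dec w l2).
      - apply (Hnear Hab' n1 Hn1). left; lra.
      - apply (Hnear Hab' n2 Hn2). right; lra. }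
    assert (Hleft : forall a b, a <= b -> b <= p0 -> IVT_on a b).
    { intros a b Hab Hb. apply (Hshift a b 0 Hab). intros z Hz. unfold f. apply ff_left; auto; lra. }
    assert (Hright : forall a b, a <= b -> p0 + d <= a -> IVT_on a b).
    { intros a b Hab Ha. apply (Hshift a b (f (p0 + d)) Hab). intros z Hz. unfold f. apply ff_right; auto; lra. }
    assert (Hp0 : u < p0) by (unfold p0; lra).
    assert (Hv0 : p0 + d < v) by (unfold p0; lra).
    intros a b Hab.
    change (IVT_on a b).
    destruct (Rle_dec b p0) as [H1|H1]; [apply Hleft; auto|].
    destruct (Rle_dec (p0 + d) a) as [H2|H2]; [apply Hright; auto|].
    destruct (Rlt_dec u a) as [H3|H3].
    + destruct (Rlt_dec b v) as [H4|H4]; [apply Hmain; auto|].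
      apply (Hsplit a (p0 + d) b); [lra| apply Hmain; lra | apply Hright; lra].
    + apply (Hsplit a p0 b); [lra| apply Hleft; lra|].
      destruct (Rlt_dec b v) as [H4|H4]; [apply Hmain; lra|].
      apply (Hsplit p0 (p0 + d) b); [lra| apply Hmain; lra | apply Hright; lra].
Qed.
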